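(* Let $(\xi_j)_{j\ge 0}$ be independent, identically distributed random variables taking values in $\{-1,0,1\}$ with $\max_{x\in\{-1,0,1\}} \mathbb{P}(\xi_0 = x) < \frac{1}{\sqrt{3}}$, and for $n\ge 1$ let $P(z):=\sum_{j=0}^n \xi_j z^j$. There exist constants $C,c>0$ (depending only on the distribution of $\xi_0$) such that for every $n\ge1$ and every $1\le d\le n$, \[\mathbb{P}(P\text{ has a double root } \alpha \text{ with } \deg(\alpha)\ge d)\le C\exp(-cd).\]
   Context: For an algebraic integer $\alpha$, $\deg(\alpha)$ denotes its algebraic degree, i.e., the degree of its minimal polynomial (the monic polynomial in $\mathbb{Z}[x]$ of least degree having $\alpha$ as a root). The event refers to $P$ having a double root (root of multiplicity at least $2$) $\alpha$ which is an algebraic integer of degree at least $d$. *)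

(* Defs.v *)
From HB Require Import structures.
From mathcomp Require Import all_boot all_order all_algebra all_field.
From mathcomp Require Import all_classical all_reals all_analysis.
Set Implicit Arguments. Unset Strict Implicit. Unset Printing Implicit Defensive.
Import Order.TTheory GRing.Theory Num.Theory.
Local Open Scope ring_scope.

(* The three values {-1,0,1} are encoded by 'I_3 via i |-> i - 1. *)
Definition coefval (i : 'I_3) : int := (Posz (nat_of_ord i) - 1)%R.

Definition randpoly (n : nat) (v : {ffun 'I_n.+1 -> 'I_3}) : {poly algC} :=
  \poly_(j < n.+1) ((coefval (v (inord j)))%:~R).

Definition algdeg (a : algC) : nat := (size (minCpoly a)).-1.

Definition double_root (p : {poly algC}) (a : algC) : Prop :=
  (('X - a%:P) ^+ 2 %| p)%R.

Definition event (n d : nat) (v : {ffun 'I_n.+1 -> 'I_3}) : Prop :=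
  exists a : algC, [/\ a \in Aint, double_root (@randpoly n v) a & (d <= algdeg a)%N].

(* probability, under the i.i.d. law with one-point masses p, of the event *)
Definition prob_event (R : realType) (p : 'I_3 -> R) (n d : nat) : R :=
  \sum_(v : {ffun 'I_n.+1 -> 'I_3} | `[< @event n d v >]) \prod_(j < n.+1) p (v j).

(* Main.v *)
Require Import Defs.
From HB Require Import structures.
From mathcomp Require Import all_boot all_order all_algebra all_field.
From mathcomp Require Import all_classical all_reals all_analysis.
From mathcomp Require Import ring lra.
Import Order.TTheory GRing.Theory Num.Theory.
Local Open Scope ring_scope.

Definition Pz (n : nat) (v : {ffun 'I_n.+1 -> 'I_3}) : {poly int} :=
  \poly_(j < n.+1) coefval (v (inord j)).

Lemma randpolyE n v : randpoly v = map_poly (intr : int -> algC) (Pz n v).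
Proof.
apply/polyP=> i; rewrite coef_map !coef_poly; case: ifP => //.
Qed.

Lemma ZQC (p : {poly int}) :
  map_poly (ratr : rat -> algC) (map_poly (intr : int -> rat) p) = map_poly intr p.
Proof. by rewrite -map_poly_comp; apply: eq_map_poly => b; rewrite /= rmorph_int. Qed.

Lemma stepA n d v : @event n d v ->
  exists mz : {poly int}, [/\ mz \is monic, (d <= (size mz).-1)%N &
    exists Q, @Pz n v = Q * mz ^+ 2].
Proof.
move=> [a [Aa dr dle]].
have [mz Dm] := floorpP Aa.
have [m [Dm' monm] dvm] := minCpolyP a.
have mE : m = map_poly (intr : int -> rat) mz.
  apply: (@map_poly_inj _ _ (ratr : {rmorphism rat -> algC})).
  by rewrite ZQC -Dm -Dm'.
have szm : size (minCpoly a) = size mz by rewrite Dm size_map_inj_poly //; exact: intr_inj.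
have monz : mz \is monic.
  move: monm; rewrite mE !monicE lead_coef_map_inj; [|exact: intr_inj|exact: rmorph0].
  by rewrite -(eqr_int rat) rmorph1 => ->.
exists mz; split => //; first by rewrite -szm.
set P := @Pz n v.
set PQ := map_poly (intr : int -> rat) P.
have PC : map_poly ratr PQ = randpoly v by rewrite ZQC randpolyE.
have Mm : minCpoly a = map_poly ratr m by [].
have rootP : root (randpoly v) a.
  rewrite -dvdp_XsubCl; apply: dvdp_trans dr; by rewrite expr2 dvdp_mulr.
have [S PQE] : exists S, PQ = S * m.
  by exists (PQ %/ m); rewrite divpK // -dvm PC.
have d0 : root (randpoly v)^`() a.
  case/dvdpP: dr => T ->.
  by rewrite /root derivM expr2 derivM !derivB derivX derivC !hornerE subrr; simpl; rewrite !(mulr0, mul0r, addr0).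
have nzm : m != 0 by apply: monic_neq0.
have szm2 : (1 < size m)%N.
  have ratr_inj : injective (ratr : rat -> algC) by apply: fmorph_inj.
  by have := size_minCpoly a; rewrite Dm' (size_map_inj_poly ratr_inj) ?rmorph0.
have ndm : ~~ root (map_poly (ratr : rat -> algC) m^`()) a.
  rewrite dvm; apply/negP => /dvdp_leq H.
  have nz' : m^`() != 0.
    apply/eqP => H0; have := congr1 (fun p : {poly rat} => p`_(size m).-2) H0; rewrite /= coef_deriv coef0.
    have -> : ((size m).-2).+1 = (size m).-1 by case: (size m) szm2 => [|[|k]].
    by move/eqP; rewrite -lead_coefE (monicP monm) pnatr_eq0; case: (size m) szm2 => [|[|k]].
  by have := H nz'; rewrite leqNgt lt_size_deriv.
have rS : root (map_poly (ratr : rat -> algC) S) a.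
  move: d0; rewrite -PC PQE rmorphM /= derivM !deriv_map.
  have := root_minCpoly a; rewrite Dm' /root => /eqP H0.
  move: ndm; rewrite /root !hornerE H0 mulr0 add0r mulf_eq0 => /negbTE ->.
  by rewrite orbF.
have [U SE] : exists U, S = U * m by exists (S %/ m); rewrite divpK // -dvm.
have PQ2 : PQ = U * m ^+ 2 by rewrite PQE SE expr2 mulrA.
have mz2 : mz ^+ 2 \is monic := monic_exp 2 monz.
have Pe := Pdiv.IdomainMonic.divp_eq mz2 P.
have szr : (size (P %% mz ^+ 2)%R < size (mz ^+ 2))%N := ltn_modpN0 _ (monic_neq0 mz2).
have intr_inj' : injective (intr : int -> rat) by apply: intr_inj.
have r0 : P %% mz ^+ 2 = 0.
  set r := P %% mz ^+ 2 in Pe szr *.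
  have eQ : map_poly (intr : int -> rat) r = (U - map_poly intr (P %/ mz ^+ 2)) * m ^+ 2.
    rewrite mulrBl -PQ2 /PQ {1}Pe rmorphD rmorphM rmorphXn /= -mE.
    by rewrite addrC addKr.
  apply/eqP; rewrite -size_poly_eq0 -(size_map_inj_poly intr_inj' (rmorph0 _)) size_poly_eq0.
  apply/negP => /negP nz.
  have := dvdp_leq nz (eq_ind_r (fun x => m ^+ 2 %| x) (dvdp_mull _ (dvdpp (m ^+ 2))) eQ).
  rewrite (size_map_inj_poly intr_inj' (rmorph0 _)) mE -rmorphXn /=.
  by rewrite (size_map_inj_poly intr_inj' (rmorph0 _)) leqNgt szr.
by exists (P %/ mz ^+ 2); rewrite {1}Pe r0 addr0.
Qed.

Definition Pb (n : nat) (v : {ffun 'I_n.+1 -> 'I_3}) : {poly 'F_3} :=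
  map_poly (intr : int -> 'F_3) (Pz n v).

Definition mon (j : nat) (c : {ffun 'I_j -> 'F_3}) : {poly 'F_3} :=
  'X^j + \poly_(i < j) (if @insub _ (fun x => (x < j)%N) 'I_j i is Some k then c k else 0).

Arguments mon {j} c.

Lemma PbE n v : Pb n v = \poly_(j < n.+1) ((coefval (v (inord j)))%:~R : 'F_3).
Proof.
apply/polyP=> i; rewrite coef_map !coef_poly; case: ifP => //.
Qed.

Lemma size_Pb n v : (size (Pb n v) <= n.+1)%N.
Proof. rewrite PbE; exact: size_poly. Qed.

Lemma mon_monic j (c : {ffun 'I_j -> 'F_3}) : mon c \is monic.
Proof.
by rewrite /mon monicE lead_coefDl ?lead_coefXn // size_polyXn ltnS size_poly.
Qed.

Lemma size_mon j (c : {ffun 'I_j -> 'F_3}) : size (mon c) = j.+1.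
Proof. by rewrite /mon size_addl ?size_polyXn // ltnS size_poly. Qed.

Lemma monE (h : {poly 'F_3}) : h \is monic ->
  h = mon [ffun k : 'I_(size h).-1 => h`_k].
Proof.
move=> mh; apply/polyP => i; rewrite /mon coefD coefXn coef_poly.
have sz : size h = (size h).-1.+1 by rewrite prednK // lt0n size_poly_eq0 monic_neq0.
case: (ltngtP i (size h).-1) => [lt|gt|->].
- rewrite add0r; case: insubP => [k _ kE|]; last by rewrite lt.
  by rewrite ffunE kE.
- rewrite add0r nth_default //; rewrite sz; exact: gt.
- by rewrite addr0 -lead_coefE (monicP mh).
Qed.

Lemma stepA2 n d v : @event n d v -> ('X^(n.+1) %| Pb n v) \/
  exists j : 'I_n.+1, [/\ (d <= j)%N, (j.*2 <= n.+1)%N &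
    exists c : {ffun 'I_j -> 'F_3}, (mon c) ^+ 2 %| Pb n v].
Proof.
move=> /stepA [mz [monz dle [Q PE]]].
set h := map_poly (intr : int -> 'F_3) mz.
have hl : lead_coef h = 1.
  by rewrite lead_coef_map_eq (monicP monz) ?mulr1z ?oner_neq0.
have mh : h \is monic by rewrite monicE hl.
have szh : size h = size mz by rewrite size_map_poly_id0 // (monicP monz) rmorph1 oner_neq0.
have PbE : Pb n v = map_poly intr Q * h ^+ 2 by rewrite /Pb PE rmorphM rmorphXn.
have [->|nz] := eqVneq (Pb n v) 0; first by left; rewrite dvdp0.
right.
have hnz : h != 0 by apply: monic_neq0.
have le1 : (size (h ^+ 2) <= n.+1)%N.
  apply: leq_trans (dvdp_leq nz _) _; first by rewrite PbE dvdp_mull.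
  exact: size_Pb.
have sh2 : size (h ^+ 2) = ((size h).-1 * 2).+1.
  by rewrite -size_exp prednK // lt0n size_poly_eq0 expf_neq0.
have jle : ((size h).-1 < n.+1)%N.
  move: le1; rewrite sh2 ltnS => H; apply: leq_ltn_trans (leq_trans _ H) _ => //.
  by rewrite leq_pmulr.
exists (Ordinal jle) => /=; split.
- by rewrite szh.
- by move: le1; rewrite sh2 -muln2 => /ltnW.
- exists [ffun k : 'I_(size h).-1 => h`_k]; by rewrite -monE // PbE dvdp_mull.
Qed.
Lemma countK (R : realType) (I J : finType) (p : J -> R) (q : R) (j0 : J)
  (K : {set I}) (S : {set {ffun I -> J}}) :
  (forall x, 0 <= p x) -> (forall x, p x <= q) -> \sum_x p x = 1 ->
  {in S &, forall v w : {ffun I -> J}, (forall i, i \notin K -> v i = w i) -> v = w} ->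
  \sum_(v in S) \prod_i p (v i) <= q ^+ #|K|.
Proof.
move=> p0 pq p1 injS.
have q0 : 0 <= q by apply: le_trans (pq j0).
pose F (v : {ffun I -> J}) := \prod_(i | i \notin K) p (v i).
have F0 v : 0 <= F v by apply: prodr_ge0.
have step1 : \sum_(v in S) \prod_i p (v i) <= \sum_(v in S) q ^+ #|K| * F v.
  apply: ler_sum => v _; rewrite (bigID (fun i => i \in K)) /=.
  apply: ler_wpM2r; first exact: F0. rewrite -prodr_const.
  by apply: ler_prod => i _; rewrite p0 pq.
apply: le_trans step1 _; rewrite -mulr_sumr -[leRHS]mulr1.
apply: ler_wpM2l; first exact: exprn_ge0.
pose reset (v : {ffun I -> J}) := [ffun i => if i \in K then j0 else v i].
have Fr v : F (reset v) = F v.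
  by apply: eq_bigr => i /negbTE iK; rewrite ffunE iK.
have rinj : {in S &, injective reset}.
  move=> v w vS wS e; apply: injS => // i /negbTE iK.
  by have := congr1 (fun f : {ffun I -> J} => f i) e; rewrite /= !ffunE iK.
pose G (w : {ffun I -> J}) := \prod_i (if i \in K then (w i == j0)%:R else p (w i)).
have G0 w : 0 <= G w by apply: prodr_ge0 => i _; case: ifP.
have GF v : G (reset v) = F v.
  rewrite /G (bigID (fun i => i \in K)) /= big1 ?mul1r.
    by rewrite -Fr; apply: eq_bigr => i /negbTE ->.
  by move=> i iK; rewrite iK ffunE iK eqxx.
have -> : \sum_(v in S) F v = \sum_(w in reset @: S) G w.
  rewrite big_imset //=; apply: eq_bigr => v _; by rewrite GF.
apply: (@le_trans _ _ (\sum_w G w)).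
  rewrite [leRHS](bigID (fun w => w \in reset @: S)) /= lerDl.
  by apply: sumr_ge0 => w _.
rewrite /G -(bigA_distr_bigA (fun i j => if i \in K then (j == j0)%:R else p j)) /=.
rewrite big1 // => i _; case: (i \in K) => //.
by rewrite (bigD1 j0) //= eqxx big1 ?addr0 // => j /negbTE ->.
Qed.

Definition f3 (x : 'I_3) : 'F_3 := (coefval x)%:~R.
Lemma f3_inj : injective f3.
Proof. move=> x y; case: x => [[|[|[|?]]] ?]; case: y => [[|[|[|?]]] ?] //; try by move=> _; apply/val_inj. Qed.

Lemma coef_Pb n v (i : 'I_n.+1) : (Pb n v)`_i = f3 (v i).
Proof. by rewrite PbE coef_poly ltn_ord inord_val. Qed.

Lemma card_lt N k : (k <= N)%N -> #|[set i : 'I_N | (i < k)%N]| = k.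
Proof.
move=> kN.
have -> : [set i : 'I_N | (i < k)%N] = (widen_ord kN) @: [set: 'I_k].
  apply/setP => i; rewrite inE; apply/idP/imsetP => [ik|[j _ ->]].
    by exists (Ordinal ik) => //; apply/val_inj.
  by rewrite /= ltn_ord.
have wi : injective (widen_ord kN) by move=> a b /(congr1 val) /= ab; apply/val_inj.
by rewrite (card_imset _ wi) cardsT card_ord.
Qed.

Lemma countg (R : realType) (p : 'I_3 -> R) q n k (g : {poly 'F_3}) :
  (forall x, 0 <= p x) -> (forall x, p x <= q) -> \sum_x p x = 1 ->
  g != 0 -> size g = k.+1 -> (k <= n.+1)%N ->
  \sum_(v : {ffun 'I_n.+1 -> 'I_3} | g %| Pb n v) \prod_(j < n.+1) p (v j) <= q ^+ k.
Proof.
move=> p0 pq p1 gnz sg kn.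
rewrite -(card_lt _ _ kn).
rewrite (eq_bigl (fun v => v \in [set v : {ffun 'I_n.+1 -> 'I_3} | g %| Pb n v])); last first.
  by move=> v; rewrite inE.
apply: (@countK R _ _ p q ord0 [set i : 'I_n.+1 | (i < k)%N] _ p0 pq p1) => v w; rewrite !inE => gv gw agree.
have dv : g %| Pb n v - Pb n w by apply: dvdp_sub.
have sz : (size (Pb n v - Pb n w)%R <= k)%N.
  apply/leq_sizeP => j kj; rewrite coefB.
  case: (ltnP j n.+1) => jn.
    have := coef_Pb n v (Ordinal jn); have := coef_Pb n w (Ordinal jn); rewrite /= => -> ->.
    by rewrite agree ?subrr // inE -leqNgt.
  by rewrite !nth_default ?subrr // (leq_trans (size_Pb _ _)).
have e : Pb n v - Pb n w = 0.
  apply/eqP; apply: contraT => nz.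
  by have := dvdp_leq nz dv; rewrite sg ltnNge sz.
apply/ffunP => i; apply: f3_inj; rewrite -!coef_Pb.
by apply/eqP; rewrite -subr_eq0 -coefB e coef0.
Qed.

Lemma union_bound (R : realType) (T X : finType) (w : T -> R) (P : pred T)
  (B : pred X) (Q : X -> pred T) :
  (forall v, 0 <= w v) -> (forall v, P v -> exists2 x, B x & Q x v) ->
  \sum_(v | P v) w v <= \sum_(x | B x) \sum_(v | Q x v) w v.
Proof.
move=> w0 cov.
rewrite (exchange_big_dep predT) //= [leLHS]big_mkcond /=.
apply: ler_sum => v _; case: ifP => Pv; last by apply: sumr_ge0.
have [x Bx Qx] := cov v Pv.
rewrite (bigD1 x) /=; last by rewrite Bx Qx.
by rewrite lerDl; apply: sumr_ge0.
Qed.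

Lemma geom (R : realType) (s : R) (d N : nat) : 0 <= s -> s < 1 ->
  \sum_(j < N | (d <= j)%N) s ^+ j <= s ^+ d / (1 - s).
Proof.
move=> s0 s1.
have inv : (\sum_(j < N | (d <= j)%N) s ^+ j) * (1 - s) = s ^+ d - s ^+ (maxn N d).
  elim: N => [|N IH]; first by rewrite big_ord0 mul0r max0n subrr.
  rewrite big_mkcond big_ord_recr /= -big_mkcond /= mulrDl IH.
  case: (leqP d N) => dN.
    have -> : maxn N.+1 d = N.+1 by apply/maxn_idPl; apply: leqW.
    by rewrite exprS; ring.
  rewrite mul0r addr0.
  by have -> : maxn N.+1 d = d by apply/maxn_idPr.
rewrite ler_pdivlMr ?subr_gt0 // inv lerBlDr lerDl.
exact: exprn_ge0.
Qed.

Lemma event_cover n d v : @event n d v ->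
  ('X^(n.+1) %| Pb n v) ||
  [exists j : 'I_n.+1, [&& (d <= j)%N, (j.*2 <= n.+1)%N &
      [exists c : {ffun 'I_j -> 'F_3}, (mon c) ^+ 2 %| Pb n v]]].
Proof.
case/stepA2 => [->//|[j [dj j2 [c hc]]]].
apply/orP; right; apply/existsP; exists j; rewrite dj j2 /=.
by apply/existsP; exists c.
Qed.

Theorem lemma1p3 (R : realType) (p : 'I_3 -> R) :
  (forall x, 0 <= p x) -> \sum_(x < 3) p x = 1 ->
  (forall x, p x < 1 / Num.sqrt 3) ->
  exists C c : R, [/\ 0 < C, 0 < c &
    forall n d : nat, (1 <= n)%N -> (1 <= d <= n)%N ->
      prob_event p n d <= C * expR (- c * d%:R)].
Proof.
move=> p0 p1 p3.
pose q := Num.max (p ord0) (Num.max (p (inord 1)) (p (inord 2))).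
have pq : forall x, p x <= q.
  move=> [[|[|[|m]]] Hm] //.
  - by rewrite /q le_max; apply/orP; left; have -> : Ordinal Hm = ord0 by apply/val_inj.
  - rewrite /q le_max le_max; apply/orP; right; apply/orP; left.
    by have -> : Ordinal Hm = inord 1 by apply/val_inj; rewrite /= inordK.
  - rewrite /q le_max le_max; apply/orP; right; apply/orP; right.
    by have -> : Ordinal Hm = inord 2 by apply/val_inj; rewrite /= inordK.
have q3 : q < 1 / Num.sqrt 3 by rewrite /q !gt_max !p3.
have q0 : 0 <= q by apply: le_trans (pq ord0).
have s3 : Num.sqrt 3 ^+ 2 = 3 :> R by rewrite sqr_sqrtr // ler0n.
have s3p : 0 < Num.sqrt 3 :> R by rewrite sqrtr_gt0 ltr0n.
have qs : q * Num.sqrt 3 < 1 by rewrite -ltr_pdivlMr // -[_ / _]mul1r.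
have r1 : 3 * q ^+ 2 < 1.
  rewrite -s3 -exprMn mulrC.
  have h := mulr_ge0 q0 (ltW s3p).
  move: qs h; set t := q * Num.sqrt 3 => h1 h2.
  rewrite expr2; nra.
have q1 : q < 1.
  have : 1 <= Num.sqrt 3 :> R.
    by rewrite -[leLHS]sqrtr1 ler_sqrt // ler1n.
  move: qs q0; set t := Num.sqrt 3; move=> *; nra.
pose s := Num.max (Num.max (3 * q ^+ 2) q) (2^-1).
have s1 : s < 1 by rewrite /s 2!gt_max r1 q1 /= invf_lt1 ?ltr1n.
have rs : 3 * q ^+ 2 <= s by rewrite /s 2!le_max lexx.
have qs' : q <= s by rewrite /s 2!le_max lexx orbT.
have s0 : 0 < s by rewrite /s 2!lt_max invr_gt0 ltr0n !orbT.
exists (1 + 1 / (1 - s)), (- ln s); split.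
- by rewrite addr_gt0 // divr_gt0 // subr_gt0.
- by rewrite oppr_gt0 ln_lt0 // s0 s1.
move=> n d n1 /andP [d1 dn].
rewrite opprK expRM_natr lnK ?posrE //.
rewrite /prob_event.
pose W (v : {ffun 'I_n.+1 -> 'I_3}) := \prod_(j < n.+1) p (v j).
have W0 v : 0 <= W v by apply: prodr_ge0.
pose Q (b : bool) (v : {ffun 'I_n.+1 -> 'I_3}) := if b then 'X^(n.+1) %| Pb n v else
  [exists j : 'I_n.+1, [&& (d <= j)%N, (j.*2 <= n.+1)%N &
      [exists c : {ffun 'I_j -> 'F_3}, (mon c) ^+ 2 %| Pb n v]]].
have step1 := @union_bound R _ _ W (fun v => `[< @event n d v >]) predT Q W0.
have {step1} step1 : \sum_(v | `[< @event n d v >]) W v <=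
   \sum_(v | 'X^(n.+1) %| Pb n v) W v +
   \sum_(v | [exists j : 'I_n.+1, [&& (d <= j)%N, (j.*2 <= n.+1)%N &
      [exists c : {ffun 'I_j -> 'F_3}, (mon c) ^+ 2 %| Pb n v]]]) W v.
  rewrite -(big_bool _ (fun b => \sum_(v | Q b v) W v)).
  apply: step1 => v /asboolP ev.
  by case/orP: (@event_cover n d v ev) => H; [exists true|exists false].
have partA : \sum_(v | 'X^(n.+1) %| Pb n v) W v <= s ^+ d.
  apply: le_trans (@countg R p q n n.+1 'X^(n.+1) p0 pq p1 _ _ (leqnn _)) _.
  - by rewrite monic_neq0 // monicXn.
  - by rewrite size_polyXn.
  apply: le_trans (ler_wiXn2l q0 (ltW q1) _) _; first by apply: leq_trans dn _.
  by apply: lerXn2r; rewrite // nnegrE ?ltW.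
have partB : \sum_(v | [exists j : 'I_n.+1, [&& (d <= j)%N, (j.*2 <= n.+1)%N &
      [exists c : {ffun 'I_j -> 'F_3}, (mon c) ^+ 2 %| Pb n v]]]) W v
      <= s ^+ d / (1 - s).
  apply: le_trans (@union_bound R _ _ W _ (fun j : 'I_n.+1 => (d <= j)%N && (j.*2 <= n.+1)%N)
     (fun j v => [exists c : {ffun 'I_j -> 'F_3}, (mon c) ^+ 2 %| Pb n v]) W0 _) _.
    move=> v /existsP [j /and3P [dj j2 ex]]; by exists j; rewrite ?dj ?j2.
  apply: le_trans (@geom R s d n.+1 (ltW s0) s1).
  rewrite [leRHS]big_mkcond [leLHS]big_mkcond; apply: ler_sum => j _.
  case dj: (d <= j)%N => //=.
  case j2: (j.*2 <= n.+1)%N => /=; last by rewrite exprn_ge0 // ltW.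
  apply: le_trans (@union_bound R _ _ W _ predT
     (fun (c : {ffun 'I_j -> 'F_3}) v => (mon c) ^+ 2 %| Pb n v) W0 _) _.
    by move=> v /existsP [c hc]; exists c.
  apply: (@le_trans _ _ (\sum_(c : {ffun 'I_j -> 'F_3}) q ^+ (j.*2))).
    apply: ler_sum => c _.
    have nz : mon c ^+ 2 != 0 by rewrite expf_neq0 // monic_neq0 // mon_monic.
    have sz : size (mon c ^+ 2) = (j.*2).+1.
      rewrite -(prednK (n := size _)) ?lt0n ?size_poly_eq0 //.
      by rewrite size_exp size_mon muln2.
    exact: (@countg R p q n j.*2 (mon c ^+ 2) p0 pq p1 nz sz j2).
  rewrite sumr_const card_ffun card_Fp // card_ord -mulr_natl natrX.
  rewrite -mul2n exprM -exprMn.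
  by apply: lerXn2r; rewrite // nnegrE ?mulr_ge0 ?exprn_ge0 // ltW.
apply: (le_trans step1); apply: le_trans (lerD partA partB) _.
by rewrite mulrDl mul1r mulrC mul1r.
Qed.
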